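(* Let $n$ be an even positive integer, $p$ a prime dividing $n$, and $p^a$ the largest power of $p$ dividing $n$. Suppose there is a prime $q$ with $n/3<q<n/2$ and $n-2q<p^a$. Then: (a) if $p=2$, for every $1\le k\le n-1$ the coefficient $\binom{n}{k}$ is divisible by $2$ or $q$; (b) if $p\ne2$, then $\binom{n}{k}$ is divisible by $p$ or $q$ for all $1\le k\le n-1$ if and only if $\binom{n}{n/2}$ is divisible by $p$. *)

(* Defs.v *)
From mathcomp Require Import all_boot.

(* Main.v *)
Require Import Defs.
From mathcomp Require Import all_boot.
From mathcomp Require Import zify.

Lemma divn_between c q x : 0 < q -> c * q <= x < c.+1 * q -> x %/ q = c.
Proof.
move=> q0 /andP[h1 h2]; apply/eqP; rewrite eqn_leq.
rewrite -ltnS ltn_divLR // h2 /= leq_divRL //.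
Qed.

Lemma legendre_small q m : prime q -> m < q * q -> logn q m`! = m %/ q.
Proof.
move=> pq hm; rewrite logn_fact //.
have q1 := prime_gt1 pq.
case: m hm => [|m] hm; first by rewrite big_geq // div0n.
rewrite big_ltn // expn1 big1_seq ?addn0 // => k /andP[_].
rewrite mem_index_iota => /andP[k2 _].
apply: divn_small; apply: (leq_trans hm).
have -> : q * q = q ^ 2 by rewrite expnS expn1.
by rewrite leq_exp2l.
Qed.

Lemma logn_bin q n k : prime q -> n < q * q -> k <= n ->
  logn q 'C(n, k) = n %/ q - k %/ q - (n - k) %/ q.
Proof.
move=> pq hn hk.
have hf := bin_fact hk.
have e : logn q n`! = logn q 'C(n, k) + (logn q k`! + logn q (n - k)`!).
  by rewrite -hf lognM ?bin_gt0 ?muln_gt0 ?fact_gt0 // lognM ?fact_gt0.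
have l1 : k < q * q by lia.
have l2 : n - k < q * q by lia.
rewrite !legendre_small // in e.
rewrite e; move: (logn q _) (k %/ q) ((n - k) %/ q) => a b c; lia.
Qed.

Lemma q_dvd_bin q n k : prime q -> k <= n -> (q %| 'C(n, k)) = (0 < logn q 'C(n, k)).
Proof.
move=> pq hk; rewrite logn_gt0 mem_primes pq bin_gt0 hk //.
Qed.

Lemma p_dvd_bin p n k a : prime p -> 0 < k -> p ^ a %| n -> ~~ (p ^ a %| k) ->
  p %| 'C(n, k).
Proof.
move=> pp; case: k => [//|k] _ hn hk.
case: (boolP (p %| 'C(n, k.+1))) => // hC; exfalso; move/negP: hk; apply.
have cop : coprime (p ^ a) 'C(n, k.+1) by apply: coprimeXl; rewrite prime_coprime.
rewrite -(Gauss_dvdl _ cop) -mul_bin_diag.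
exact: dvdn_mulr.
Qed.

Lemma dvd_close P x y : P %| x -> P %| y -> x - y < P -> y - x < P -> x = y.
Proof.
move=> hx hy h1 h2.
have d1 : P %| x - y by apply: dvdn_sub.
have d2 : P %| y - x by apply: dvdn_sub.
case: (posnP (x - y)) => e1.
  case: (posnP (y - x)) => e2; first lia.
  have := dvdn_leq e2 d2; lia.
have := dvdn_leq e1 d1; lia.
Qed.

Theorem mainTheorem10 (n p q : nat) :
  0 < n -> ~~ odd n -> prime p -> p %| n ->
  prime q -> n < 3 * q -> 2 * q < n -> n - 2 * q < p ^ logn p n ->
  (p = 2 -> forall k, 1 <= k <= n - 1 -> (2 %| 'C(n, k)) || (q %| 'C(n, k)))
  /\
  (p <> 2 ->
     ((forall k, 1 <= k <= n - 1 -> (p %| 'C(n, k)) || (q %| 'C(n, k)))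
      <-> p %| 'C(n, n %/ 2))).
Proof.
move=> n0 ev pp pn pq h3 h2 hr.
have n2 : n %% 2 = 0 by rewrite modn2; case: (odd n) ev.
set P := p ^ logn p n in hr.
have Pn : P %| n := pfactor_dvdnn p n.
have q1 := prime_gt1 pq.
have q3 : 2 < q.
  case: (ltnP 2 q) => // hq; have hq2 : q = 2 by lia.
  rewrite hq2 in h2 h3; lia.
have nqq : n < q * q by apply: (leq_trans h3); rewrite leq_mul2r q3 orbT.
have q0 : 0 < q by lia.
have nq : n %/ q = 2 by apply: divn_between => //; lia.
have outer : forall k, 1 <= k <= n - 1 -> ~~ (q <= k <= q + (n - 2 * q)) ->
    (p %| 'C(n, k)) || (q %| 'C(n, k)).
  move=> k /andP[k1 k2] hk.
  case: (leqP k (n - 2 * q)) => ka.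
    apply/orP; left; apply: (p_dvd_bin _ _ _ _ pp _ Pn) => //.
    apply/negP => /(dvdn_leq k1); lia.
  case: (leqP (2 * q) k) => kb.
    apply/orP; left; rewrite -bin_sub; last lia.
    apply: (p_dvd_bin _ _ _ _ pp _ Pn) => //; first lia.
    apply/negP => /dvdn_leq; lia.
  apply/orP; right; rewrite q_dvd_bin //; last lia.
  rewrite logn_bin //; last lia.
  case: (ltnP k q) => kq.
    rewrite (divn_small kq) (@divn_between 1 q (n - k)) //; lia.
  rewrite (@divn_between 1 q k) //; last lia.
  rewrite (@divn_between 0 q (n - k)) //; lia.
have middle : forall k, q <= k <= q + (n - 2 * q) -> P %| k -> k.*2 = n.
  move=> k hk Pk; apply: (dvd_close P) => //.
  - by rewrite -muln2 dvdn_mulr.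
  - lia.
  - lia.
have Cmid : ~~ (q %| 'C(n, n %/ 2)).
  rewrite q_dvd_bin //; last lia.
  rewrite logn_bin //; last lia.
  have -> : n - n %/ 2 = n %/ 2 by lia.
  rewrite (@divn_between 1 q (n %/ 2)) //; lia.
split.
  move=> p2 k hk; rewrite -p2.
  case: (boolP (q <= k <= q + (n - 2 * q))) => hm; last exact: outer.
  apply/orP; left; apply: (p_dvd_bin _ _ _ _ pp _ Pn) => //; first lia.
  apply/negP => Pk; have e := middle k hm Pk.
  have h : P * 2 %| k * 2 by rewrite dvdn_pmul2r.
  rewrite -muln2 in e; rewrite e in h.
  have h' : p ^ (logn p n).+1 %| n by rewrite expnSr {3}p2; exact: h.
  move: h'; rewrite pfactor_dvdn //; lia.
move=> p2; split.
  move=> H; have := H (n %/ 2); rewrite (negbTE Cmid) orbF; apply; lia.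
move=> Hp k hk.
case: (boolP (q <= k <= q + (n - 2 * q))) => hm; last exact: outer.
case: (boolP (P %| k)) => Pk.
  have e := middle k hm Pk.
  have -> : k = n %/ 2 by move: e n2; clear; lia.
  by rewrite Hp.
by rewrite (p_dvd_bin _ _ _ _ pp _ Pn) //; move: hk; clear; lia.
Qed.
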